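(* Let $\mathbb A=(A_n)_{n\in\mathbb N}$ be a sequence of invertible linear operators on $\mathbb R^d$ and $\mathcal S=\{\|\cdot\|_n;\ n\in\mathbb N\}$ a sequence of norms on $\mathbb R^d$ such that there exist $K,a>0$ with $\|\mathcal A(m,n)x\|_m\le K(m/n)^a\|x\|_n$ and $\|\mathcal A(n,m)x\|_n\le K(m/n)^a\|x\|_m$ for all $m\ge n$ and $x$. Let $\mathbb B=(B_n)_{n\in\mathbb Z^+}$ with $B_n=\mathcal A(2^{n+1},2^n)$ and $\tilde{\mathcal S}=\{\|\cdot\|_{2^n};\ n\in\mathbb Z^+\}$. Then for every $\tau\in\mathbb R$, $$\tau\in\Sigma_{PD,\mathbb A,\mathcal S}\iff 2^\tau\in\Sigma_{ED,\mathbb B,\tilde{\mathcal S}}.$$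
   Context: $\mathbb N=\{1,2,\dots\}$, $\mathbb Z^+=\{0,1,\dots\}$. For invertible $(C_n)$, $\mathcal C(m,n)=C_{m-1}\cdots C_n$ ($m>n$), $\mathrm{Id}$ ($m=n$), $C_m^{-1}\cdots C_{n-1}^{-1}$ ($m<n$). Strong polynomial dichotomy of $(C_n)_{n\in\mathbb N}$ w.r.t. $\{\|\cdot\|_n\}$: there exist $K>0$, $a\ge\lambda>0$, projections $P_n$ with $C_nP_n=P_{n+1}C_n$ and, for $m\ge n$, $x$, $Q_m=\mathrm{Id}-P_m$: $\|\mathcal C(m,n)P_nx\|_m\le K(m/n)^{-\lambda}\|x\|_n$, $\|\mathcal C(n,m)Q_mx\|_n\le K(m/n)^{-\lambda}\|x\|_m$, $\|\mathcal C(m,n)x\|_m\le K(m/n)^a\|x\|_n$, $\|\mathcal C(n,m)x\|_n\le K(m/n)^a\|x\|_m$. Strong exponential dichotomy of $(C_n)_{n\in\mathbb Z^+}$ w.r.t. $\{|\cdot|_n\}$: same with $(m/n)^{-\lambda}$ replaced by $e^{-\lambda(m-n)}$ and $(m/n)^a$ by $e^{a(m-n)}$. $\Sigma_{PD,\mathbb A,\mathcal S}$: set of $\tau\in\mathbb R$ such that $(((n+1)/n)^{-\tau}A_n)_{n\in\mathbb N}$ does not admit a strong polynomial dichotomy w.r.t. $\mathcal S$. $\Sigma_{ED,\mathbb B,\tilde{\mathcal S}}$: set of $\tau>0$ such that $(\tau^{-1}B_n)_{n\in\mathbb Z^+}$ does not admit a strong exponential dichotomy w.r.t. $\tilde{\mathcal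 S}$. *)

(* Defs.v *)
From HB Require Import structures.
From mathcomp Require Import all_boot all_order all_algebra.
From mathcomp Require Import all_classical all_reals all_analysis.
Set Implicit Arguments. Unset Strict Implicit. Unset Printing Implicit Defensive.
Import Order.TTheory GRing.Theory Num.Theory.
Local Open Scope ring_scope.

Section Defs.
Variables (R : realType) (d : nat).

Definition is_norm (N : 'cV[R]_d -> R) : Prop :=
  [/\ forall x, 0 <= N x,
      forall x, N x = 0 -> x = 0,
      forall (c : R) x, N (c *: x) = `|c| * N x
    & forall x y, N (x + y) <= N x + N y].

(* fwd C n k = C_{n+k-1} ... C_{n+1} C_n  (= \mathcal C(n+k, n)) *)
Fixpoint fwd (C : nat -> 'M[R]_d) (n k : nat) : 'M[R]_d :=
  match k with
  | 0 => 1%:M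
  | k'.+1 => C (n + k')%N *m fwd C n k'
  end.

(* bwd C m k = C_m^{-1} C_{m+1}^{-1} ... C_{m+k-1}^{-1}  (= \mathcal C(m, m+k)) *)
Fixpoint bwd (C : nat -> 'M[R]_d) (m k : nat) : 'M[R]_d :=
  match k with
  | 0 => 1%:M
  | k'.+1 => bwd C m k' *m invmx (C (m + k')%N)
  end.

Definition evol (C : nat -> 'M[R]_d) (m n : nat) : 'M[R]_d :=
  if (n <= m)%N then fwd C n (m - n) else bwd C m (n - m).

Definition strong_PD (C : nat -> 'M[R]_d) (S : nat -> 'cV[R]_d -> R) : Prop :=
  exists (K a lam : R) (P : nat -> 'M[R]_d),
    0 < K /\ 0 < lam /\ lam <= a /\
        (forall n, (1 <= n)%N -> P n *m P n = P n) /\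
        (forall n, (1 <= n)%N -> C n *m P n = P n.+1 *m C n) /\
        forall m n (x : 'cV[R]_d), (1 <= n)%N -> (n <= m)%N ->
        [/\ S m (evol C m n *m (P n *m x)) <= K * (m%:R / n%:R) `^ (- lam) * S n x,
            S n (evol C n m *m ((1%:M - P m) *m x)) <= K * (m%:R / n%:R) `^ (- lam) * S m x,
            S m (evol C m n *m x) <= K * (m%:R / n%:R) `^ a * S n x
          & S n (evol C n m *m x) <= K * (m%:R / n%:R) `^ a * S m x].

Definition strong_ED (C : nat -> 'M[R]_d) (S : nat -> 'cV[R]_d -> R) : Prop :=
  exists (K a lam : R) (P : nat -> 'M[R]_d),
    0 < K /\ 0 < lam /\ lam <= a /\
        (forall n, P n *m P n = P n) /\
        (forall n, C n *m P n = P n.+1 *m C n) /\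
        forall m n (x : 'cV[R]_d), (n <= m)%N ->
        [/\ S m (evol C m n *m (P n *m x)) <= K * expR (- lam * (m%:R - n%:R)) * S n x,
            S n (evol C n m *m ((1%:M - P m) *m x)) <= K * expR (- lam * (m%:R - n%:R)) * S m x,
            S m (evol C m n *m x) <= K * expR (a * (m%:R - n%:R)) * S n x
          & S n (evol C n m *m x) <= K * expR (a * (m%:R - n%:R)) * S m x].

Definition SigmaPD (A : nat -> 'M[R]_d) (S : nat -> 'cV[R]_d -> R) (tau : R) : Prop :=
  ~ strong_PD (fun n => ((n.+1)%:R / n%:R) `^ (- tau) *: A n) S.

Definition SigmaED (B : nat -> 'M[R]_d) (S : nat -> 'cV[R]_d -> R) (tau : R) : Prop :=
  0 < tau /\ ~ strong_ED (fun n => tau^-1 *: B n) S.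

End Defs.

(* Main.v *)
Require Import Defs.
From HB Require Import structures.
From mathcomp Require Import all_boot all_order all_algebra.
From mathcomp Require Import all_classical all_reals all_analysis.
From mathcomp Require Import ring lra zify.
Import Order.TTheory GRing.Theory Num.Theory.
Local Open Scope ring_scope.

Section Evol.
Variables (R : realType) (d : nat).
Implicit Types (C : nat -> 'M[R]_d) (M X Y : 'M[R]_d).

Lemma inv_uniq M X : M \in unitmx -> M *m X = 1%:M -> invmx M = X.
Proof. by move=> uM MX; rewrite -[invmx M]mulmx1 -MX mulKmx. Qed.

Lemma inv_mulV X Y : X \in unitmx -> Y \in unitmx ->
  invmx (X *m invmx Y) = Y *m invmx X.
Proof.
move=> uX uY; apply: inv_uniq; first by rewrite unitmx_mul uX unitmx_inv uY.
by rewrite -mulmxA (mulmxA (invmx Y)) mulVmx // mul1mx mulmxV.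
Qed.

Lemma fwd_add C n i j : fwd C n (i + j) = fwd C (n + i) j *m fwd C n i.
Proof.
elim: j => [|j IH]; first by rewrite addn0 /= mul1mx.
by rewrite addnS /= IH mulmxA addnA.
Qed.

Section U.
Variables (C : nat -> 'M[R]_d) (L : nat).
Hypothesis HC : forall j, (L <= j)%N -> C j \in unitmx.

Lemma fwd_unit n k : (L <= n)%N -> fwd C n k \in unitmx.
Proof.
move=> Ln; elim: k => [|k IH] /=; first exact: unitmx1.
by rewrite unitmx_mul IH HC ?andbT // (leq_trans Ln) ?leq_addr.
Qed.

Lemma bwd_inv n k : (L <= n)%N -> bwd C n k = invmx (fwd C n k).
Proof.
move=> Ln; elim: k => [|k IH] /=; first by rewrite invmx1.
have uC : C (n + k)%N \in unitmx by apply: HC; rewrite (leq_trans Ln) ?leq_addr.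
symmetry; apply: inv_uniq; first by rewrite unitmx_mul uC (fwd_unit _ _ Ln).
rewrite IH -mulmxA (mulmxA (fwd C n k)) mulmxV ?mul1mx ?mulmxV //.
exact: fwd_unit.
Qed.

Definition FF j := fwd C L (j - L).

Lemma FF_unit j : FF j \in unitmx.
Proof. exact: fwd_unit. Qed.

Lemma fwd_F n k : (L <= n)%N -> fwd C n k = FF (n + k) *m invmx (FF n).
Proof.
move=> Ln; rewrite /FF.
have -> : (n + k - L = (n - L) + k)%N by lia.
rewrite fwd_add subnKC //.
by rewrite mulmxK // FF_unit.
Qed.

Lemma evol_F m n : (L <= m)%N -> (L <= n)%N -> evol C m n = FF m *m invmx (FF n).
Proof.
move=> Lm Ln; rewrite /evol; case: leqP => nm.
  by rewrite fwd_F // subnKC.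
rewrite bwd_inv // fwd_F // subnKC ?(ltnW nm) //.
by rewrite inv_mulV // FF_unit.
Qed.

Lemma evol_cocycle m k n : (L <= m)%N -> (L <= k)%N -> (L <= n)%N ->
  evol C m k *m evol C k n = evol C m n.
Proof.
move=> Lm Lk Ln; rewrite !evol_F // -mulmxA (mulmxA (invmx (FF k))).
by rewrite mulVmx ?FF_unit // mul1mx.
Qed.

Lemma evol_unit m n : (L <= m)%N -> (L <= n)%N -> evol C m n \in unitmx.
Proof. by move=> Lm Ln; rewrite evol_F // unitmx_mul unitmx_inv !FF_unit. Qed.

End U.

Lemma evol_nn C n : evol C n n = 1%:M.
Proof. by rewrite /evol leqnn subnn. Qed.

Lemma evol_succ C k : evol C k.+1 k = C k.
Proof. by rewrite /evol leqnSn subSnn /= addn0 mulmx1. Qed.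

Lemma fwd_scale C (c f : nat -> R) n k :
  (forall j, (n <= j)%N -> c j = f j.+1 / f j) ->
  (forall j, (n <= j)%N -> f j != 0) ->
  fwd (fun j => c j *: C j) n k = (f (n + k)%N / f n) *: fwd C n k.
Proof.
move=> Hc Hf; elim: k => [|k IH] /=.
  by rewrite addn0 divff ?Hf // scale1r.
rewrite IH -scalemxAr -scalemxAl scalerA Hc ?leq_addr // addnS.
congr (_ *: _); have := Hf (n + k)%N (leq_addr _ _); have := Hf n (leqnn _).
move=> h1 h2; field; apply/andP; split => //.
Qed.

Lemma evol_scale C L (c f : nat -> R) m n :
  (forall j, (L <= j)%N -> C j \in unitmx) ->
  (forall j, (L <= j)%N -> c j = f j.+1 / f j) ->
  (forall j, (L <= j)%N -> f j != 0) ->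
  (L <= m)%N -> (L <= n)%N ->
  evol (fun j => c j *: C j) m n = (f m / f n) *: evol C m n.
Proof.
move=> HC Hc Hf hLm hLn.
have HC' : forall j, (L <= j)%N -> c j *: C j \in unitmx.
  move=> j Lj; rewrite unitmxZ ?HC // Hc // unitfE mulf_neq0 ?invr_eq0 ?Hf //;
  by rewrite (leq_trans Lj).
have FFs : forall j, (L <= j)%N -> FF (fun j => c j *: C j) L j = (f j / f L) *: FF C L j.
  move=> j Lj; rewrite /FF (fwd_scale C c f) ?subnKC //.
rewrite (evol_F _ _ HC') // (evol_F _ _ HC) // !FFs // invmxZ; last first.
  by rewrite unitmxZ ?(FF_unit _ _ HC) // unitfE mulf_neq0 ?invr_eq0 ?Hf.
rewrite -scalemxAr -scalemxAl scalerA; congr (_ *: _).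
have := Hf m hLm; have := Hf n hLn; have := Hf L (leqnn _) => h1 h2 h3.
by field; rewrite h1 h2.
Qed.

Lemma evol_comm C L (P : nat -> 'M[R]_d) i j :
  (forall j, (L <= j)%N -> C j \in unitmx) ->
  (forall k, (L <= k)%N -> C k *m P k = P k.+1 *m C k) ->
  (L <= i)%N -> (i <= j)%N -> P j *m evol C j i = evol C j i *m P i.
Proof.
move=> HC HP Li ij; rewrite -(subnKC ij); elim: (j - i)%N => [|k IH].
  by rewrite addn0 evol_nn mulmx1 mul1mx.
have Lk : (L <= i + k)%N by rewrite (leq_trans Li) ?leq_addr.
rewrite addnS -(@evol_cocycle C L HC (i + k).+1 (i + k) i) //; last exact: leqW.
rewrite evol_succ mulmxA -HP // -!mulmxA IH.
by rewrite mulmxA.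
Qed.

End Evol.

Section Main.
Variables (R : realType) (d : nat) (A : nat -> 'M[R]_d)
  (S : nat -> 'cV[R]_d -> R) (tau Kg ag : R).
Hypothesis HA : forall n, (1 <= n)%N -> A n \in unitmx.
Hypothesis HS : forall n, (1 <= n)%N -> is_norm (S n).
Hypothesis HKg : 0 < Kg.
Hypothesis Hag : 0 < ag.
Hypothesis Hg : forall m n (x : 'cV[R]_d), (1 <= n)%N -> (n <= m)%N ->
       S m (evol A m n *m x) <= Kg * (m%:R / n%:R) `^ ag * S n x /\
       S n (evol A n m *m x) <= Kg * (m%:R / n%:R) `^ ag * S m x.

Definition A' := fun n : nat => ((n.+1)%:R / n%:R) `^ (- tau) *: A n.
Definition B' := fun n : nat => (2 `^ tau)^-1 *: evol A (2 ^ n.+1)%N (2 ^ n)%N.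
Local Notation E := (evol A').
Definition fA (k : nat) : R := expR (- tau * ln (k%:R : R)).
Definition D (m n : nat) : R := ln (m%:R : R) - ln (n%:R : R).

Lemma S_ge0 n x : (1 <= n)%N -> 0 <= S n x.
Proof. by move=> n1; case: (HS _ n1). Qed.

Lemma SZ n c x : (1 <= n)%N -> S n (c *: x) = `|c| * S n x.
Proof. by move=> n1; case: (HS _ n1). Qed.

Lemma ln2_gt0 : 0 < ln (2 : R).
Proof. by apply: ln_gt0; rewrite ltr1n. Qed.

Lemma powR_ratio m n y : (1 <= m)%N -> (1 <= n)%N ->
  (m%:R / n%:R) `^ y = expR (y * D m n).
Proof.
move=> m1 n1; have m0 : (0:R) < m%:R by rewrite ltr0n.
have n0 : (0:R) < n%:R by rewrite ltr0n.
by rewrite /powR gt_eqF ?divr_gt0 // ln_div ?posrE.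
Qed.

Lemma ln2pow k : ln (((2 ^ k)%N)%:R : R) = k%:R * ln 2.
Proof. by rewrite natrX lnXn // mulr_natl. Qed.

Lemma fA_neq0 j : fA j != 0.
Proof. by rewrite gt_eqF // expR_gt0. Qed.

Lemma cA j : (1 <= j)%N -> ((j.+1)%:R / j%:R) `^ (- tau) = fA j.+1 / fA j.
Proof. by move=> j1; rewrite powR_ratio // /D /fA -expRN -expRD; congr expR; ring. Qed.

Lemma fA_ratio m n : fA m / fA n = expR (- tau * D m n).
Proof. by rewrite /fA /D -expRN -expRD; congr expR; ring. Qed.

Lemma A'_unit j : (1 <= j)%N -> A' j \in unitmx.
Proof.
move=> j1; rewrite /A' unitmxZ ?HA // unitfE gt_eqF // powR_gt0 //.
by rewrite divr_gt0 // ltr0n.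
Qed.

Lemma E_scale m n : (1 <= m)%N -> (1 <= n)%N -> E m n = (fA m / fA n) *: evol A m n.
Proof.
move=> m1 n1; rewrite /A'.
apply: (evol_scale _ _ A 1 (fun j => ((j.+1)%:R / j%:R) `^ (- tau)) fA m n HA) => //.
  exact: cA.
by move=> j _; exact: fA_neq0.
Qed.

Lemma Ec m k n : (1 <= m)%N -> (1 <= k)%N -> (1 <= n)%N ->
  E m k *m E k n = E m n.
Proof. exact: (evol_cocycle _ _ _ _ A'_unit). Qed.

Lemma B_unit j : evol A (2 ^ j.+1)%N (2 ^ j)%N \in unitmx.
Proof. by apply: (evol_unit _ _ _ _ HA); rewrite expn_gt0. Qed.

Lemma B'_unit j : (0 <= j)%N -> B' j \in unitmx.
Proof.
move=> _; rewrite /B' unitmxZ ?B_unit // unitfE invr_eq0 gt_eqF // powR_gt0.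
Qed.

Lemma fA2 k : fA (2 ^ k)%N = expR (- tau * ln 2 * k%:R).
Proof. by rewrite /fA ln2pow; congr expR; ring. Qed.

Lemma EB m n : evol B' m n = E (2 ^ m)%N (2 ^ n)%N.
Proof.
have e1 : evol B' m n = (fA (2 ^ m)%N / fA (2 ^ n)%N) *:
     evol (fun j => evol A (2 ^ j.+1)%N (2 ^ j)%N) m n.
  rewrite /B'; apply: (evol_scale _ _ _ 0 (fun _ => (2 `^ tau)^-1) (fun k => fA (2 ^ k)%N)) => //.
  - by move=> j _; exact: B_unit.
  - move=> j _; rewrite !fA2 -expRN -expRD /powR pnatr_eq0 /= -expRN.
    by congr expR; rewrite -natr1; ring.
  - by move=> j _; exact: fA_neq0.
have fw : forall j, fwd (fun j => evol A (2 ^ j.+1)%N (2 ^ j)%N) 0 j = FF _ _ A 1 (2 ^ j)%N.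
  elim=> [|j IH]; first by rewrite /FF expn0 subnn.
  rewrite /= IH (evol_F _ _ _ _ HA) ?expn_gt0 // -mulmxA mulVmx ?mulmx1 //.
  exact: (FF_unit _ _ _ _ HA).
rewrite e1 (evol_F _ _ _ 0 (fun j _ => B_unit j)) // /FF !subn0 !fw.
by rewrite -(evol_F _ _ _ _ HA) ?expn_gt0 // E_scale ?expn_gt0.
Qed.

Lemma gh (s Dv u v w : R) : 0 <= s -> 0 <= Dv -> u + v <= w ->
  expR (u * Dv) * (Kg * expR (v * Dv) * s) <= Kg * expR (w * Dv) * s.
Proof.
move=> s0 D0 uvw.
have -> : expR (u * Dv) * (Kg * expR (v * Dv) * s) = Kg * expR ((u + v) * Dv) * s.
  by rewrite mulrDl expRD; ring.
apply: ler_wpM2r => //; apply: ler_wpM2l; first exact: ltW.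
by rewrite ler_expR; apply: ler_wpM2r.
Qed.

Lemma D_ge0 m n : (1 <= n)%N -> (n <= m)%N -> 0 <= D m n.
Proof.
move=> n1 nm; have m1 : (1 <= m)%N := leq_trans n1 nm.
by rewrite subr_ge0 ler_ln ?posrE ?ltr0n ?ler_nat.
Qed.

Lemma growth m n x : (1 <= n)%N -> (n <= m)%N ->
  S m (E m n *m x) <= Kg * expR ((ag + `|tau|) * D m n) * S n x /\ S n (E n m *m x) <= Kg * expR ((ag + `|tau|) * D m n) * S m x.
Proof.
move=> n1 nm; have m1 : (1 <= m)%N := leq_trans n1 nm.
have D0 := D_ge0 _ _ n1 nm.
have [h1 h2] := Hg _ _ x n1 nm.
rewrite powR_ratio // in h1 h2.
rewrite !E_scale // -!scalemxAl !SZ // !fA_ratio.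
have -> : D n m = - D m n by rewrite /D; ring.
rewrite !(ger0_norm (expR_ge0 _)).

have t1 := ler_norm tau; have t2 := ler_norm (- tau); rewrite normrN in t2.
split.
  apply: (le_trans (ler_wpM2l (expR_ge0 _) h1)); apply: gh => //; first exact: S_ge0.
  lra.
rewrite mulrN -mulNr opprK.
apply: (le_trans (ler_wpM2l (expR_ge0 _) h2)); apply: gh => //; first exact: S_ge0.
lra.
Qed.

Definition G := Kg * expR ((ag + `|tau|) * ln 2).

Lemma G_ge0 : 0 <= G.
Proof. by rewrite mulr_ge0 ?expR_ge0 // ltW. Qed.

Lemma blockg b j x : (1 <= b)%N -> (b <= j)%N -> (j <= 2 * b)%N ->
  S j (E j b *m x) <= G * S b x /\ S b (E b j *m x) <= G * S j x.
Proof.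
move=> b1 bj j2; have j1 : (1 <= j)%N := leq_trans b1 bj.
have [h1 h2] := growth j b x b1 bj.
have Dl : D j b <= ln 2.
  rewrite /D lerBlDr -lnM ?posrE ?ltr0n // ler_ln ?posrE ?mulr_gt0 ?ltr0n //.
  by rewrite -natrM ler_nat.
have e : Kg * expR ((ag + `|tau|) * D j b) <= G.
  rewrite /G; apply: ler_wpM2l; first exact: ltW.
  rewrite ler_expR; apply: ler_wpM2l => //.
  by apply: addr_ge0; [exact: ltW | exact: normr_ge0].
split.
  apply: (le_trans h1); apply: ler_wpM2r => //; exact: S_ge0.
apply: (le_trans h2); apply: ler_wpM2r => //; exact: S_ge0.
Qed.

Lemma PD_ED : strong_PD A' S -> strong_ED B' (fun n => S (2 ^ n)%N).
Proof.
case=> K [a [lam [P [HK [Hlam [Hla [HPP [HPC Hb]]]]]]]].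
have l2 := ln2_gt0.
exists K, (a * ln 2), (lam * ln 2), (fun n => P (2 ^ n)%N).
split; first done. split; first by rewrite mulr_gt0.
split; first by rewrite ler_wpM2r // ltW.
split; first by move=> n; apply: HPP; rewrite expn_gt0.
split.
  move=> n; rewrite -(evol_succ _ _ B' n) EB; symmetry.
  apply: (evol_comm _ _ A' 1 P _ _ A'_unit HPC); first by rewrite expn_gt0.
  by rewrite expnS leq_pmull.
move=> m n x nm; cbv beta.
have m1 : (1 <= 2 ^ m)%N by rewrite expn_gt0.
have n1 : (1 <= 2 ^ n)%N by rewrite expn_gt0.
have nm' : (2 ^ n <= 2 ^ m)%N by rewrite leq_exp2l.
have [h1 h2 h3 h4] := Hb _ _ x n1 nm'.
have key : forall y : R, (((2 ^ m)%N)%:R / ((2 ^ n)%N)%:R) `^ y = expR (y * ln 2 * (m%:R - n%:R)).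
  by move=> y; rewrite powR_ratio // /D !ln2pow; congr expR; ring.
rewrite !key in h1 h2 h3 h4.
rewrite !EB -!mulNr.
by split.
Qed.

Lemma chain3 (u v w s G1 H G2 : R) : 0 <= G1 -> 0 <= H ->
  u <= G1 * v -> v <= H * w -> w <= G2 * s -> u <= G1 * H * G2 * s.
Proof.
move=> g h uv vw ws; apply: (le_trans uv); rewrite -!mulrA; apply: ler_wpM2l => //.
apply: (le_trans vw); exact: ler_wpM2l.
Qed.

Lemma fin_bound (G1 KE e eL rho s K0 : R) : 0 <= G1 -> 0 <= KE -> 0 <= s ->
  0 <= rho -> 0 <= K0 -> e <= eL * rho ->
  G1 * (KE * e) * G1 * s <= (K0 + G1 * G1 * KE * eL) * rho * s.
Proof.
move=> g k s0 r0 hK0 he; apply: ler_wpM2r => //.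
apply: (@le_trans _ _ (G1 * (KE * (eL * rho)) * G1)).
  by apply: ler_wpM2r => //; apply: ler_wpM2l => //; apply: ler_wpM2l.
have -> : G1 * (KE * (eL * rho)) * G1 = (G1 * G1 * KE * eL) * rho by ring.
by apply: ler_wpM2r => //; lra.
Qed.

Lemma expo (lE Dv q p : R) : 0 < lE -> Dv <= (q + 1 - p) * ln 2 ->
  expR (- lE * (q - p)) <= expR lE * expR (- (lE / ln 2) * Dv).
Proof.
move=> hl hD; rewrite -expRD ler_expR.
have l2 := ln2_gt0.
have h : lE / ln 2 * Dv <= lE / ln 2 * ((q + 1 - p) * ln 2).
  by apply: ler_wpM2l => //; rewrite divr_ge0 // ltW.
have e : lE / ln 2 * ((q + 1 - p) * ln 2) = lE * (q - p) + lE.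
  by field; rewrite gt_eqF.
rewrite e in h; rewrite !mulNr.
lra.
Qed.

Definition lg k := trunc_log 2 k.

Lemma blk k : (1 <= k)%N ->
  [/\ (1 <= 2 ^ lg k)%N, (2 ^ lg k <= k)%N & (k <= 2 * 2 ^ lg k)%N].
Proof.
move=> k1; split; first by rewrite expn_gt0.
  exact: trunc_logP.
by rewrite -expnS ltnW // trunc_log_ltn.
Qed.

Lemma Dpq m n : (1 <= n)%N -> (n <= m)%N ->
  D m n <= ((lg m)%:R + 1 - (lg n)%:R) * ln 2.
Proof.
move=> n1 nm; have m1 : (1 <= m)%N := leq_trans n1 nm.
have [_ h0 _] := blk _ n1.
have h1 : ln (m%:R : R) <= ln (((2 ^ (lg m).+1)%N)%:R).
  by rewrite ler_ln ?posrE ?ltr0n ?expn_gt0 // ler_nat ltnW // trunc_log_ltn.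
have h2 : ln (((2 ^ lg n)%N)%:R : R) <= ln (n%:R).
  by rewrite ler_ln ?posrE ?ltr0n ?expn_gt0 // ler_nat.
rewrite !ln2pow -natr1 in h1 h2; rewrite /D.
have -> : ((lg m)%:R + 1 - (lg n)%:R) * ln (2:R) =
   ((lg m)%:R + 1) * ln 2 - (lg n)%:R * ln 2 by ring.
lra.
Qed.

Lemma ED_PD : strong_ED B' (fun n => S (2 ^ n)%N) -> strong_PD A' S.
Proof.
case=> KE [aE [lE [Q [HKE [HlE [HlaE [HQQ [HQC Hb]]]]]]]].
have l2 := ln2_gt0.
have Qc : forall p q, (p <= q)%N ->
    Q q *m E (2 ^ q)%N (2 ^ p)%N = E (2 ^ q)%N (2 ^ p)%N *m Q p.
  move=> p q pq; rewrite -!EB.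
  exact: (evol_comm _ _ B' 0 Q p q B'_unit (fun k _ => HQC k)).
pose P := fun k => E k (2 ^ lg k)%N *m Q (lg k) *m E (2 ^ lg k)%N k.
have Pcomm : forall i j, (1 <= i)%N -> (i <= j)%N -> P j *m E j i = E j i *m P i.
  move=> i j i1 ij; have j1 : (1 <= j)%N := leq_trans i1 ij.
  have [bi1 bi _] := blk _ i1; have [bj1 bj _] := blk _ j1.
  have pq : (lg i <= lg j)%N := leq_trunc_log 2 ij.
  have e1 : P j *m E j i = E j (2 ^ lg j)%N *m (Q (lg j) *m E (2 ^ lg j)%N (2 ^ lg i)%N) *m E (2 ^ lg i)%N i.
    by rewrite /P !mulmxA -!mulmxA Ec // Ec // -(Ec (2 ^ lg j)%N (2 ^ lg i)%N i) // !mulmxA.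
  rewrite e1 Qc // /P !mulmxA Ec // Ec //.
have lam'0 : 0 < lE / ln 2 by rewrite divr_gt0.
have a0 : 0 <= ag + `|tau| by apply: addr_ge0; [exact: ltW | exact: normr_ge0].
have X0 : 0 <= G * G * KE * expR lE.
  by rewrite !mulr_ge0 ?G_ge0 ?expR_ge0 // ltW.
exists (Kg + G * G * KE * expR lE), (lE / ln 2 + (ag + `|tau|)), (lE / ln 2), P.
split; first by apply: (lt_le_trans HKg); rewrite lerDl.
split; first done. split; first lra.
split.
  move=> n n1; have [b1 _ _] := blk _ n1; rewrite /P.
  rewrite -!mulmxA (mulmxA (E (2 ^ lg n)%N n)) Ec // evol_nn mul1mx.
  by rewrite (mulmxA (Q (lg n))) HQQ !mulmxA.
split.
  move=> n n1; rewrite -(evol_succ _ _ A' n); symmetry; exact: Pcomm.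
move=> m n x n1 nm; have m1 : (1 <= m)%N := leq_trans n1 nm.
have [bn1 bn n2] := blk _ n1; have [bm1 bm m2] := blk _ m1.
have pq : (lg n <= lg m)%N := leq_trunc_log 2 nm.
have ex := expo lE _ _ _ HlE (Dpq _ _ n1 nm).
have D0 := D_ge0 _ _ n1 nm.
have He0 : 0 <= KE * expR (- lE * ((lg m)%:R - (lg n)%:R)).
  by rewrite mulr_ge0 ?expR_ge0 // ltW.
have mono : forall s : R, 0 <= s -> Kg * expR ((ag + `|tau|) * D m n) * s <=
    (Kg + G * G * KE * expR lE) * expR ((lE / ln 2 + (ag + `|tau|)) * D m n) * s.
  move=> s s0; apply: ler_wpM2r => //; apply: ler_pM; rewrite ?expR_ge0 //.
    exact: ltW.
    by rewrite lerDl.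
  by rewrite ler_expR; apply: ler_wpM2r => //; lra.
have [g1 g2] := growth _ _ x n1 nm.
rewrite !powR_ratio //.
split.
- have eq1 : E m n *m (P n *m x) = E m (2 ^ lg m)%N *m (E (2 ^ lg m)%N (2 ^ lg n)%N
      *m (Q (lg n) *m (E (2 ^ lg n)%N n *m x))).
    by rewrite /P !mulmxA !Ec.
  rewrite eq1.
  have [hb1 _ _ _] := Hb _ _ (E (2 ^ lg n)%N n *m x) pq; rewrite EB in hb1.
  have c1 := (blockg _ _ (E (2 ^ lg m)%N (2 ^ lg n)%N *m (Q (lg n) *m (E (2 ^ lg n)%N n *m x))) bm1 bm m2).1.
  have c3 := (blockg _ _ x bn1 bn n2).2.
  apply: (le_trans (chain3 _ _ _ _ _ _ _ G_ge0 He0 c1 hb1 c3)).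
  apply: fin_bound; rewrite ?G_ge0 ?expR_ge0 //; [exact: ltW | exact: S_ge0 | exact: ltW].
- have eq2 : E n m *m ((1%:M - P m) *m x) = E n (2 ^ lg n)%N *m (E (2 ^ lg n)%N (2 ^ lg m)%N
      *m ((1%:M - Q (lg m)) *m (E (2 ^ lg m)%N m *m x))).
    by rewrite /P !mulmxBl !mul1mx !mulmxBr !mulmxA !Ec.
  rewrite eq2.
  have [_ hb2 _ _] := Hb _ _ (E (2 ^ lg m)%N m *m x) pq; rewrite EB in hb2.
  have c1 := (blockg _ _ (E (2 ^ lg n)%N (2 ^ lg m)%N *m ((1%:M - Q (lg m)) *m (E (2 ^ lg m)%N m *m x))) bn1 bn n2).1.
  have c3 := (blockg _ _ x bm1 bm m2).2.
  apply: (le_trans (chain3 _ _ _ _ _ _ _ G_ge0 He0 c1 hb2 c3)).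
  apply: fin_bound; rewrite ?G_ge0 ?expR_ge0 //; [exact: ltW | exact: S_ge0 | exact: ltW].
- by apply: (le_trans g1); apply: mono; exact: S_ge0.
- by apply: (le_trans g2); apply: mono; exact: S_ge0.
Qed.

End Main.

Theorem corollary2p1 (R : realType) (d : nat) (A : nat -> 'M[R]_d)
  (S : nat -> 'cV[R]_d -> R) :
  (forall n, (1 <= n)%N -> A n \in unitmx) ->
  (forall n, (1 <= n)%N -> is_norm (S n)) ->
  (exists K a : R, 0 < K /\ 0 < a /\
     forall m n (x : 'cV[R]_d), (1 <= n)%N -> (n <= m)%N ->
       S m (evol A m n *m x) <= K * (m%:R / n%:R) `^ a * S n x /\
       S n (evol A n m *m x) <= K * (m%:R / n%:R) `^ a * S m x) ->
  forall tau : R,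
    SigmaPD A S tau <->
    SigmaED (fun n => evol A (2 ^ n.+1)%N (2 ^ n)%N) (fun n => S (2 ^ n)%N) (2 `^ tau).
Proof.
move=> HA HS [Kg [ag [HKg [Hag Hg]]]] tau.
rewrite /SigmaPD /SigmaED; split.
- move=> nPD; split; first by rewrite powR_gt0.
  move=> ED; apply: nPD; exact: (ED_PD _ _ _ _ _ _ _ HA HS HKg Hag Hg ED).
- move=> [_ nED] PD; apply: nED; exact: (PD_ED _ _ _ _ _ HA PD).
Qed.
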